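(* Let $\mathcal{A}\in\mathbb{R}^{d_1\times\cdots\times d_k}$ be an order-$k$ real tensor. (a) If $\pi_1,\pi_2\in\mathcal{P}_{[k]}$ with $\pi_1\le\pi_2$ and $\mathcal{A}$ is $\pi_1$-OD, then $\mathcal{A}$ is $\pi_2$-OD. (b) If $\pi\in\mathcal{P}_{[k]}$, $\pi\ne\mathbf{1}_{[k]}$, and $\mathcal{A}$ is $\pi$-OD with a decomposition $\mathcal{A}=\sum_{n=1}^r\lambda_n\mathbf{a}^{(n)}_1\otimes\cdots\otimes\mathbf{a}^{(n)}_k$ as in the definition of $\pi$-OD, then $\|\mathrm{Unfold}_\pi(\mathcal{A})\|_\sigma=\lambda_1$.
   Context: $\mathcal{P}_{[k]}$ is the set of partitions of $[k]$, ordered by refinement: $\pi_1\le\pi_2$ if every block of $\pi_1$ is contained in a block of $\pi_2$; $\mathbf{1}_{[k]}=\{[k]\}$. $\mathcal{A}$ is called $\pi$-orthogonal decomposable ($\pi$-OD) if $\mathcal{A}=\sum_{n=1}^r\lambda_n\mathbf{a}^{(n)}_1\otimes\cdots\otimes\mathbf{a}^{(n)}_k$ with $\lambda_1\ge\lambda_2\ge\cdots\ge\lambda_r\ge0$ and vectors $\mathbf{a}^{(n)}_i\in\mathbb{R}^{d_i}$ satisfying $\langle\otimes_{i\in B}\mathbf{a}^{(n)}_i,\otimes_{i\in B}\mathbf{a}^{(m)}_i\rangle=\delta_{nm}$ for all $B\in\pi$ and all $n,m\in[r]$ (inner product = sum of entrywise products). For a real tensor $\mathcal{T}\in\mathbb{R}^{e_1\times\cdots\times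 e_m}$, $\|\mathcal{T}\|_\sigma=\sup\{\sum t_{i_1\dots i_m}x^{(1)}_{i_1}\cdots x^{(m)}_{i_m}:\ \|\mathbf{x}_n\|_2=1\}$. Unfolding: for $\pi=\{B_1,\dots,B_\ell\}$, $\mathrm{Unfold}_\pi(\mathcal{A})$ is the order-$\ell$ tensor of dimensions $(\prod_{j\in B_1}d_j,\dots,\prod_{j\in B_\ell}d_j)$ whose entry at $(m_1,\dots,m_\ell)$ is $a_{i_1\dots i_k}$, where $m_j$ corresponds to $(i_r)_{r\in B_j}$ under a fixed bijection $\prod_{r\in B_j}[d_r]\to[\prod_{r\in B_j}d_r]$. *)

(* Defs.v *)
From HB Require Import structures.
From mathcomp Require Import all_boot all_order all_algebra.
From mathcomp Require Import boolp classical_sets reals.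
Set Implicit Arguments. Unset Strict Implicit. Unset Printing Implicit Defensive.
Import Order.TTheory GRing.Theory Num.Theory.
Local Open Scope ring_scope.

Section TensorDefs.
Variables (R : realType) (k : nat) (d : 'I_k -> nat).

Definition idx := {dffun forall i : 'I_k, 'I_(d i)}.

Definition blk (B : {set 'I_k}) :=
  {dffun forall j : {i : 'I_k | i \in B}, 'I_(d (val j))}.

Definition restr (x : idx) (B : {set 'I_k}) : blk B :=
  @finfun _ (fun j : {i : 'I_k | i \in B} => 'I_(d (val j))) (fun j => x (val j)).

Definition blk_inner (B : {set 'I_k}) (u v : forall i : 'I_k, 'I_(d i) -> R) : R :=
  \sum_(y : blk B) ((\prod_(j : {i : 'I_k | i \in B}) u (val j) (y j)) *
                    (\prod_(j : {i : 'I_k | i \in B}) v (val j) (y j))).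

Definition refines (P1 P2 : {set {set 'I_k}}) : Prop :=
  forall B1, B1 \in P1 -> exists2 B2, B2 \in P2 & B1 \subset B2.

Definition OD_decomp (P : {set {set 'I_k}}) (A : idx -> R) (r : nat)
    (lam : 'I_r -> R) (a : 'I_r -> forall i : 'I_k, 'I_(d i) -> R) : Prop :=
  [/\ forall x : idx, A x = \sum_(n < r) lam n * \prod_(i < k) a n i (x i),
      forall n m : 'I_r, (n <= m)%N -> lam m <= lam n,
      forall n : 'I_r, 0 <= lam n &
      forall B, B \in P -> forall n m : 'I_r,
        blk_inner B (a n) (a m) = (n == m)%:R].

Definition OD (P : {set {set 'I_k}}) (A : idx -> R) : Prop :=
  exists r lam a, @OD_decomp P A r lam a.

(* Multi-indices of Unfold_pi(A): one index m_B (ranging over the block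
   multi-indices of B, i.e. identified with [prod_{r in B} d_r]) per block B. *)
Definition uidx (P : {set {set 'I_k}}) :=
  {dffun forall Bs : {B : {set 'I_k} | B \in P}, blk (val Bs)}.

(* Entry of Unfold_pi(A) at (m_B)_B is a_{i} where i is the (for a partition,
   unique) multi-index with i|_B = m_B for every block B. *)
Definition Unfold (P : {set {set 'I_k}}) (A : idx -> R) (m : uidx P) : R :=
  \sum_(x : idx | [forall Bs, restr x (val Bs) == m Bs]) A x.

End TensorDefs.

Definition snorm (R : realType) (I : finType) (E : I -> finType)
    (T : {dffun forall i : I, E i} -> R) : R :=
  reals.sup (fun v : R => exists x : forall i : I, E i -> R,
      (forall i, \sum_(e : E i) x i e ^+ 2 = 1) /\
      v = \sum_(m : {dffun forall i : I, E i}) T m * \prod_(i : I) x i (m i)).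

Arguments Unfold [R k d] P A m.

(* Main.v *)
Require Import Defs.
From HB Require Import structures.
From mathcomp Require Import all_boot all_order all_algebra.
From mathcomp Require Import reals.
From mathcomp Require Import lra.
Import Order.TTheory GRing.Theory Num.Theory.
Local Open Scope ring_scope.
Set Implicit Arguments. Unset Strict Implicit. Unset Printing Implicit Defensive.

Lemma prod_sum_dep (R : comNzRingType) (I : finType) (E : I -> finType)
    (F : forall i, E i -> R) :
  \prod_i \sum_(e : E i) F i e =
  \sum_(m : {dffun forall i, E i}) \prod_i F i (m i).
Proof.
have step1 i : \sum_(e : E i) F i e =
    \sum_(j | tagged_with E i j) untag 0 (F i) j.
  rewrite [RHS](eq_bigl (fun j => (j \in tagged_with E i) && true)); last first.
    by move=> j; rewrite andbT.
  rewrite (big_sub_cond (tagged_with E i) xpredT) (reindex (tag_with i)); last first.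
    by apply: onW_bij; apply: tag_with_bij.
  by apply: eq_bigr => e _ /=; rewrite (@untagE _ E _ 0 i (F i) (Tagged E e) (erefl i)).
rewrite (eq_bigr _ (fun i _ => step1 i)) bigA_distr_big_dep.
rewrite big_sub (reindex (@to_family_tagged_with I E)); last first.
  by apply: onW_bij; apply: to_family_tagged_with_bij.
rewrite (reindex (@fprod_of_dffun I E)); last first.
  by apply: onW_bij; apply: fprod_of_dffun_bij.
apply: eq_bigr => m _; apply: eq_bigr => i _ /=.
by rewrite ffunE (@untagE _ E _ 0 i (F i) (Tagged E (m i)) (erefl i)).
Qed.

Lemma bessel (R : realFieldType) (T : finType) r (v : 'I_r -> T -> R) (w : T -> R) :
  (forall n m, \sum_t v n t * v m t = (n == m)%:R) -> \sum_t w t ^+ 2 = 1 ->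
  \sum_n (\sum_t v n t * w t) ^+ 2 <= 1.
Proof.
move=> Hv Hw.
set c := fun n => \sum_t v n t * w t.
rewrite -/(\sum_n c n ^+ 2).
have H1 : \sum_t w t * (\sum_n c n * v n t) = \sum_n c n ^+ 2.
  under eq_bigr do rewrite big_distrr.
  rewrite exchange_big; apply: eq_bigr => n _ /=.
  have -> : c n ^+ 2 = c n * \sum_t v n t * w t by rewrite expr2.
  rewrite big_distrr; apply: eq_bigr => t _ /=.
  by rewrite mulrCA [w t * _]mulrC.
have H2 : \sum_t (\sum_n c n * v n t) ^+ 2 = \sum_n c n ^+ 2.
  under eq_bigr do rewrite expr2 big_distrl.
  under eq_bigr do under eq_bigr do rewrite big_distrr.
  rewrite exchange_big; apply: eq_bigr => n _ /=.
  have E m : \sum_t c n * v n t * (c m * v m t) = c n * c m * (n == m)%:R.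
    rewrite -Hv big_distrr; apply: eq_bigr => t _ /=.
    by rewrite -!mulrA; congr (_ * _); rewrite mulrCA.
  rewrite exchange_big /= (bigD1 n) //= E eqxx mulr1 big1 ?addr0 ?expr2 //.
  by move=> m /negbTE nm; rewrite E eq_sym nm mulr0.
have : 0 <= \sum_t (w t - \sum_n c n * v n t) ^+ 2.
  by apply: sumr_ge0 => t _; apply: sqr_ge0.
under eq_bigr do rewrite sqrrB.
rewrite big_split /= big_split /= sumrN sumrMnl Hw H1 H2.
move=> h; lra.
Qed.

Lemma blk_inner_prod (R : realType) k (d : 'I_k -> nat) (B : {set 'I_k})
    (u v : forall i : 'I_k, 'I_(d i) -> R) :
  blk_inner B u v = \prod_(i in B) \sum_(e : 'I_(d i)) u i e * v i e.
Proof.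
rewrite /blk_inner.
rewrite (eq_bigr (fun y : blk d B => \prod_(j : {i : 'I_k | i \in B})
   (u (val j) (y j) * v (val j) (y j)))); last by move=> y _; rewrite big_split.
rewrite [RHS]big_sub.
exact: (esym (prod_sum_dep (fun (j : {i : 'I_k | i \in B}) (e : 'I_(d (val j))) => u (val j) e * v (val j) e))).
Qed.

Lemma parta (R : realType) k (d : 'I_k -> nat) (A : idx d -> R)
    (P1 P2 : {set {set 'I_k}}) r (lam : 'I_r -> R) a :
  partition P1 [set: 'I_k] -> partition P2 [set: 'I_k] ->
  refines P1 P2 -> OD_decomp P1 A lam a -> OD_decomp P2 A lam a.
Proof.
move=> /and3P [/eqP cov1 triv1 _] /and3P [/eqP cov2 triv2 n02] ref.
case=> HA Hdec Hpos Horth; split => // B2 HB2 n m.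
rewrite blk_inner_prod.
set Q := [set B1 in P1 | B1 \subset B2].
have trivQ : trivIset Q.
  by apply: trivIsetS triv1; apply/subsetP => B; rewrite inE => /andP [].
have covQ : cover Q = B2.
  apply/setP => i; apply/bigcupP/idP => [[B1] | iB2].
    by rewrite inE => /andP [_ /subsetP]; apply.
  have iC : i \in cover P1 by rewrite cov1 inE.
  exists (pblock P1 i); last by rewrite mem_pblock.
  rewrite inE pblock_mem //=.
  have [B2' HB2' sub] := ref _ (pblock_mem iC).
  have iB2' : i \in B2' by apply: (subsetP sub); rewrite mem_pblock.
  have -> : B2 = B2'.
    by rewrite -(def_pblock triv2 HB2 iB2) (def_pblock triv2 HB2' iB2').
  exact: sub.
rewrite -covQ big_trivIset //.
have HQ B : B \in Q -> \prod_(i in B) \sum_e a n i e * a m i e = (n == m)%:R.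
  by rewrite inE => /andP [HB _]; rewrite -blk_inner_prod Horth.
have [e | nm] := eqVneq n m.
  by rewrite e ?eqxx /= ?mulr1n big1 // => B /HQ; rewrite e eqxx /= mulr1n.
have [i iB2] : exists i, i \in B2.
  apply/set0Pn; apply: contraNneq n02 => <-; exact: HB2.
rewrite -covQ in iB2; case/bigcupP: iB2 => B1 HB1 _.
by rewrite (bigD1 B1) //= HQ // (negbTE nm) mul0r.
Qed.

Lemma amgm2 (R : realFieldType) (x y : R) : x * y <= (x ^+ 2 + y ^+ 2) / 2.
Proof. have := sqr_ge0 (x - y); rewrite sqrrB => h; lra. Qed.

Lemma half_le1 (R : realFieldType) (x y : R) : x <= 1 -> y <= 1 -> (x + y) / 2 <= 1.
Proof. move=> hx hy; lra. Qed.

Section Part.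
Variables (R : realType) (k : nat) (d : 'I_k -> nat).
Variable P : {set {set 'I_k}}.
Hypothesis hP : partition P [set: 'I_k].

Notation S := {B : {set 'I_k} | B \in P}.

Lemma coverPT : cover P = [set: 'I_k].
Proof. by case/and3P: hP => /eqP. Qed.
Lemma trivP : trivIset P.
Proof. by case/and3P: hP. Qed.

Lemma pblock_inP i : pblock P i \in P.
Proof. by apply: pblock_mem; rewrite coverPT inE. Qed.
Lemma mem_pblockP i : i \in pblock P i.
Proof. by rewrite mem_pblock coverPT inE. Qed.

Definition pB (i : 'I_k) : S := exist _ (pblock P i) (pblock_inP i).
Definition jB (i : 'I_k) : {i' : 'I_k | i' \in val (pB i)} :=
  exist _ i (mem_pblockP i).

Definition psi (y : idx d) : uidx d P :=
  @finfun _ (fun Bs : S => blk d (val Bs)) (fun Bs => restr y (val Bs)).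
Definition phi (m : uidx d P) : idx d :=
  @finfun _ (fun i : 'I_k => 'I_(d i)) (fun i => m (pB i) (jB i)).

Lemma psiK : cancel psi phi.
Proof. by move=> y; apply/ffunP => i; rewrite !ffunE. Qed.

Lemma phiK : cancel phi psi.
Proof.
move=> m; apply/ffunP => Bs; apply/ffunP => j; rewrite !ffunE.
apply: val_inj => /=.
have E : pB (val j) = Bs.
  apply: val_inj => /=; apply: def_pblock; first exact: trivP.
    exact: valP.
  exact: valP.
suff H : forall (X : S) (j' : {i' : 'I_k | i' \in val X}),
    X = Bs -> val j' = val j -> (m X j' : nat) = m Bs j by apply: H.
move=> X j' eX ej; subst X.
by have -> : j' = j by apply: val_inj.
Qed.

Lemma sum_psi (F : uidx d P -> R) : \sum_(y : idx d) F (psi y) = \sum_m F m.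
Proof.
rewrite [RHS](reindex psi) //; apply: onW_bij; exists phi.
  exact: psiK.
exact: phiK.
Qed.

Lemma prod_blocks (f : 'I_k -> R) :
  \prod_i f i = \prod_(Bs : S) \prod_(j : {i : 'I_k | i \in val Bs}) f (val j).
Proof.
rewrite [LHS](eq_bigl (fun i => i \in cover P)); last by move=> i; rewrite coverPT inE.
rewrite big_trivIset; last exact: trivP.
rewrite big_sub; apply: eq_bigr => Bs _; exact: big_sub.
Qed.

Unset Implicit Arguments.
Definition vB (u : forall i : 'I_k, 'I_(d i) -> R) (B : {set 'I_k}) (z : blk d B) : R :=
  \prod_(j : {i : 'I_k | i \in B}) u (val j) (z j).
Set Implicit Arguments.

Lemma value_formula (A : idx d -> R) r (lam : 'I_r -> R)
    (a : 'I_r -> forall i : 'I_k, 'I_(d i) -> R)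
    (HA : forall y, A y = \sum_(n < r) lam n * \prod_i a n i (y i))
    (x : forall Bs : S, blk d (val Bs) -> R) :
  \sum_(m : uidx d P) Unfold P A m * \prod_(Bs : S) x Bs (m Bs) =
  \sum_(n < r) lam n * \prod_(Bs : S)
      \sum_(z : blk d (val Bs)) vB (a n) (val Bs) z * x Bs z.
Proof.
pose c (y : idx d) (m : uidx d P) := [forall Bs : S, restr y (val Bs) == m Bs].
rewrite (eq_bigr (fun m => \sum_(y : idx d)
   (if c y m then A y * \prod_(Bs : S) x Bs (m Bs) else 0))); last first.
  by move=> m _; rewrite /Unfold big_distrl /= big_mkcond.
rewrite exchange_big /=.
rewrite (eq_bigr (fun y => A y * \prod_(Bs : S) x Bs (restr y (val Bs)))); last first.
  move=> y _; rewrite -big_mkcond /= (big_pred1 (psi y)); first by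
    apply: congr2 => //; apply: eq_bigr => Bs _; rewrite ffunE.
  move=> m; apply/forallP/eqP => [H|->].
    by apply/ffunP => Bs; rewrite ffunE; apply/esym/eqP/H.
  by move=> Bs; rewrite ffunE.
under eq_bigr => y _ do rewrite HA big_distrl /=.
rewrite exchange_big /=; apply: eq_bigr => n _.
under eq_bigr => y _ do rewrite -mulrA.
rewrite -big_distrr /=; congr (_ * _).
rewrite prod_sum_dep -sum_psi; apply: eq_bigr => y _.
rewrite prod_blocks -big_split /=; apply: eq_bigr => Bs _.
rewrite ffunE /vB; congr (_ * _); apply: eq_bigr => j _; by rewrite ffunE.
Qed.


Lemma partb (A : idx d -> R) r (hr : (0 < r)%N) (lam : 'I_r -> R)
    (a : 'I_r -> forall i : 'I_k, 'I_(d i) -> R)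
    (hk : (0 < k)%N) (hne : P != [set [set: 'I_k]]) :
  OD_decomp P A lam a -> snorm (Unfold P A) = lam (Ordinal hr).
Proof.
case=> HA Hdec Hpos Horth.
set n0 := Ordinal hr.
have Horth' (Bs : S) n m :
    \sum_(z : blk d (val Bs)) vB (a n) (val Bs) z * vB (a m) (val Bs) z = (n == m)%:R.
  exact: (Horth _ (valP Bs)).
set i0 : 'I_k := Ordinal hk.
have [B1 [B2 nB12]] : exists B1 B2 : S, B2 != B1.
  exists (pB i0).
  case: (boolP [exists B in P, B != pblock P i0]).
    case/exists_inP => B2 HB2 nB2.
    by exists (exist _ B2 HB2); apply/eqP => /(congr1 val) /= /eqP; rewrite (negbTE nB2).
  move/exists_inPn => H; exfalso; move/eqP: hne; apply.
  have HT : pblock P i0 = [set: 'I_k].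
    apply/setP => i; rewrite inE.
    have := H _ (pblock_inP i); rewrite negbK => /eqP <-.
    exact: mem_pblockP.
  apply/setP => B; rewrite inE; apply/idP/eqP => [HB | ->].
    by have := H _ HB; rewrite negbK HT => /eqP.
  by rewrite -HT pblock_inP.
rewrite /snorm.
set E := (fun v : R => _).
have lam_le n : lam n <= lam n0 by apply: Hdec.
have E0 : E (lam n0).
  exists (fun Bs => vB (a n0) (val Bs)); split.
    move=> Bs; have := Horth' Bs n0 n0; rewrite eqxx /= mulr1n => <-.
    by apply: eq_bigr => z _; rewrite expr2.
  apply: esym; apply: eq_trans (value_formula HA (fun Bs : S => vB (a n0) (val Bs))) _.
  under eq_bigr do under eq_bigr do rewrite Horth'.
  rewrite (bigD1 n0) //= big1 ?mulr1; last by move=> Bs _; rewrite ?eqxx.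
  rewrite big1 ?addr0 // => n /negbTE nn0.
  by rewrite (bigD1 B1) //= nn0 mul0r mulr0.
have Eub : forall v, E v -> v <= lam n0.
  move=> v [x [Hx ->]].
  set c := fun n (Bs : S) => \sum_(z : blk d (val Bs)) vB (a n) (val Bs) z * x Bs z.
  apply: (@le_trans _ _ (\sum_(n < r) lam n * \prod_(Bs : S) c n Bs)).
    by rewrite le_eqVlt; apply/orP; left; apply/eqP; exact: (value_formula HA x).
  have Hb (Bs : S) : \sum_n c n Bs ^+ 2 <= 1.
    exact: (@bessel _ _ _ (fun n => vB (a n) (val Bs)) (x Bs) (Horth' Bs) (Hx Bs)).
  have Hc1 n Bs : `|c n Bs| <= 1.
    have : c n Bs ^+ 2 <= 1.
      apply: le_trans (Hb Bs); rewrite (bigD1 n) //= lerDl.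
      by apply: sumr_ge0 => m _; apply: sqr_ge0.
    by rewrite -(real_normK (num_real (c n Bs))) expr_le1.
  apply: (@le_trans _ _ (\sum_n lam n0 * ((c n B1 ^+ 2 + c n B2 ^+ 2) / 2))).
    apply: ler_sum => n _.
    have hp : \prod_Bs c n Bs <= `|c n B1| * `|c n B2|.
      apply: (le_trans (ler_norm _)); rewrite normr_prod (bigD1 B1) //= (bigD1 B2) //=.
      rewrite mulrA; apply: ler_piMr.
        by rewrite mulr_ge0.
      apply: prodr_ile1 => Bs _; rewrite normr_ge0 Hc1 //.
    have h1 := real_normK (num_real (c n B1)).
    have h2 := real_normK (num_real (c n B2)).
    have g1 := normr_ge0 (c n B1).
    have g2 := normr_ge0 (c n B2).
    have := Hpos n; have := lam_le n.
    set p := \prod_Bs c n Bs in hp *.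
    set q1 := `|c n B1| in hp h1 g1 *; set q2 := `|c n B2| in hp h2 g2 *.
    move=> l2 l1; rewrite -h1 -h2.
    have hq : q1 * q2 <= (q1 ^+ 2 + q2 ^+ 2) / 2 by apply: amgm2.
    have hs : 0 <= (q1 ^+ 2 + q2 ^+ 2) / 2.
      by apply: divr_ge0 => //; apply: addr_ge0; apply: sqr_ge0.
    apply: (le_trans (ler_wpM2l l1 hp)).
    apply: (le_trans (ler_wpM2l l1 hq)).
    by apply: ler_wpM2r.
  rewrite -big_distrr /= -mulr_suml big_split /=.
  have := Hb B1; have := Hb B2; have := Hpos n0.
  set s1 := \sum_n c n B1 ^+ 2; set s2 := \sum_n c n B2 ^+ 2.
  move=> l0 h2 h1; apply: ler_piMr => //; exact: half_le1.
apply/le_anti/andP; split.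
  by apply: ge_sup; [exists (lam n0) | exact: Eub].
apply: sup_upper_bound => //; split; first by exists (lam n0).
by exists (lam n0).
Qed.


End Part.

Theorem lemma5p3 (R : realType) (k : nat) (d : 'I_k -> nat) (A : idx d -> R) :
  (0 < k)%N ->
  (forall P1 P2 : {set {set 'I_k}},
      partition P1 [set: 'I_k] -> partition P2 [set: 'I_k] ->
      refines P1 P2 -> OD P1 A -> OD P2 A) /\
  (forall P : {set {set 'I_k}},
      partition P [set: 'I_k] -> P != [set [set: 'I_k]] ->
      forall (r : nat) (hr : (0 < r)%N) (lam : 'I_r -> R)
             (a : 'I_r -> forall i : 'I_k, 'I_(d i) -> R),
      OD_decomp P A lam a ->
      snorm (Unfold P A) = lam (Ordinal hr)).
Proof.
move=> hk; split.
  move=> P1 P2 h1 h2 ref [r [lam [a H]]]; exists r, lam, a.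
  exact: (parta h1 h2 ref H).
move=> P hP hne r hr lam a H.
exact: (partb hP hr hk hne H).
Qed.
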